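(* Let $\Gamma$ be a numerical semigroup minimally generated by $r_0,\ldots,r_h$ with $h\ge 1$, and suppose $\Gamma$ is free with respect to the arrangement $(r_0,\ldots,r_h)$. For $k\in\{1,\ldots,h+1\}$ let $d_k=\gcd(r_0,\ldots,r_{k-1})$, and for $k\in\{1,\ldots,h\}$ let $e_k=d_k/d_{k+1}$. Then: (1) $\gcd(d_h,r_h)=1$; (2) $d_h$ divides $\mathrm F(\Gamma)+r_h$ (and consequently $d_h$ does not divide $\mathrm F(\Gamma)$); (3) $e_kr_k\in\langle r_0,\ldots,r_{k-1}\rangle$ for all $k=1,\ldots,h$; in particular $e_k\ge 2$; (4) $d_1>d_2>\cdots>d_{h+1}=1$; (5) $d_h\le \frac{\mathrm c(\Gamma)}{r_h-1}+1$; (6) $(d_h-1)(r_h-1)\ge 2^h$.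
   Context: A numerical semigroup is a submonoid of $(\mathbb N,+)$ with finite complement in $\mathbb N$; it has a unique minimal generating system. $\mathrm F(\Gamma)$ is the largest integer not in $\Gamma$ ($\mathrm F(\mathbb N)=-1$) and $\mathrm c(\Gamma)=\mathrm F(\Gamma)+1$. $\langle X\rangle$ denotes the submonoid generated by $X$. Gluing: if $A$ is a set of positive integers and $A=A_1\cup A_2$ a nontrivial partition, $A$ is the gluing of $A_1$ and $A_2$ if $\mathrm{lcm}(d_1',d_2')\in\langle A_1\rangle\cap\langle A_2\rangle$ where $d_i'=\gcd(A_i)$; if $A$ is the minimal generating set of $\Gamma$, one says $\Gamma$ is the gluing of the numerical semigroups $\langle A_1/d_1'\rangle$ and $\langle A_2/d_2'\rangle$. Freeness for an arrangement $(r_0,\ldots,r_h)$ of the minimal generators is defined recursively: $\Gamma$ is free if $h=0$ (so $\Gamma=\mathbb N$, $r_0=1$), or if $h\ge1$, $\{r_0,\ldots,r_h\}$ is the gluing of $\{r_0,\ldots,r_{h-1}\}$ and $\{r_h\}$, and $\Gamma_{h-1}=\langle r_0/d_h,\ldots,r_{h-1}/d_h\rangle$ is free for the arrangement $(r_0/d_h,\ldots,r_{h-1}/d_h)$. *)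

(* Defs.v *)
From mathcomp Require Import all_boot all_order all_algebra.
Set Implicit Arguments. Unset Strict Implicit. Unset Printing Implicit Defensive.
Import GRing.Theory Num.Theory.

Definition gen (A : seq nat) (n : nat) : Prop :=
  exists c : nat -> nat, n = \sum_(i < size A) c i * nth 0 A i.

Definition in_sg (A : seq nat) (z : int) : Prop :=
  exists n : nat, z = Posz n /\ gen A n.

Definition numerical (A : seq nat) : Prop :=
  exists N : nat, forall n : nat, N <= n -> gen A n.

Definition drop_at (i : nat) (A : seq nat) : seq nat := take i A ++ drop i.+1 A.

Definition minimal_gens (r : seq nat) : Prop :=
  numerical r /\ uniq r /\
  forall i, i < size r -> ~ gen (drop_at i r) (nth 0 r i).

Definition frobenius (A : seq nat) (f : int) : Prop :=
  ~ in_sg A f /\ forall z : int, (f < z)%R -> in_sg A z.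

(* gcd of a sequence (gcd of the empty sequence is 0) *)
Definition gcds (s : seq nat) : nat := \big[gcdn/0]_(x <- s) x.

Definition dk (r : seq nat) (k : nat) : nat := gcds (take k r).

Definition ek (r : seq nat) (k : nat) : nat := dk r k %/ dk r k.+1.

Definition glued_last (A1 : seq nat) (a : nat) : Prop :=
  gen A1 (lcmn (gcds A1) a) /\ gen [:: a] (lcmn (gcds A1) a).

Fixpoint free_aux (h : nat) (r : seq nat) : Prop :=
  match h with
  | 0 => r = [:: 1]
  | h'.+1 =>
      glued_last (take h r) (nth 0 r h) /\
      free_aux h' [seq x %/ gcds (take h r) | x <- take h r]
  end.

Definition free_arr (r : seq nat) : Prop := free_aux (size r).-1 r.

(* Main.v *)
Require Import Defs.
From mathcomp Require Import all_boot all_order all_algebra.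
From mathcomp Require Import zify ring lra.
Import Order.TTheory GRing.Theory Num.Theory.
Set Implicit Arguments. Unset Strict Implicit.

Lemma gen_nil n : gen [::] n <-> n = 0.
Proof.
split; first by case=> c ->; rewrite big_ord0.
by move=> ->; exists (fun _ => 0); rewrite big_ord0.
Qed.

Lemma gen_cons x A n : gen (x :: A) n <-> exists c m, gen A m /\ n = c * x + m.
Proof.
split.
- case=> c ->; rewrite /= big_ord_recl /=.
  exists (c 0), (\sum_(i < size A) c (lift ord0 i) * nth 0 A i); split=> //.
  by exists (fun i => c i.+1); apply: eq_bigr => i _; rewrite lift0.
- case=> c0 [m [[c Hm] ->]].
  exists (fun i => if i is j.+1 then c j else c0).
  rewrite /= big_ord_recl /= Hm; congr (_ + _); apply: eq_bigr => i _; rewrite lift0.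
Qed.

Lemma gen0 A : gen A 0.
Proof. by exists (fun _ => 0); rewrite big1. Qed.

Lemma gen_add A m n : gen A m -> gen A n -> gen A (m + n).
Proof.
elim: A m n => [|x A IH] m n.
- by move=> /gen_nil -> /gen_nil ->; apply/gen_nil.
- move=> /gen_cons [c [m' [Hm ->]]] /gen_cons [c' [n' [Hn ->]]].
  apply/gen_cons; exists (c + c'), (m' + n'); split; first exact: IH.
  by rewrite mulnDl; lia.
Qed.

Lemma gen_cat_l A B n : gen A n -> gen (A ++ B) n.
Proof.
elim: A n => [|x A IH] n.
- by move=> /gen_nil ->; apply: gen0.
- move=> /gen_cons [c [m [Hm ->]]]; apply/gen_cons; exists c, m; split=> //.
  exact: IH.
Qed.

Lemma gen_cat A B n : gen (A ++ B) n <-> exists m m', gen A m /\ gen B m' /\ n = m + m'.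
Proof.
elim: A n => [|x A IH] n /=.
- split; first by move=> H; exists 0, n; split; [apply/gen_nil|].
  by case=> m [m' [/gen_nil -> [H ->]]].
- split.
  + move=> /gen_cons [c [m [/IH [k [k' [Hk [Hk' ->]]]] ->]]].
    exists (c * x + k), k'; split; last by split=> //; lia.
    by apply/gen_cons; exists c, k.
  + case=> m [m' [/gen_cons [c [k [Hk ->]]] [Hm' ->]]].
    apply/gen_cons; exists c, (k + m'); split; last by lia.
    by apply/IH; exists k, m'.
Qed.

Lemma gen_mem A x c : x \in A -> gen A (c * x).
Proof.
elim: A => [|y A IH] //; rewrite inE => /orP [/eqP ->|H].
- by apply/gen_cons; exists c, 0; split; [apply: gen0|lia].
- by apply/gen_cons; exists 0, (c * x); split; [apply: IH|lia].
Qed.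

Lemma gen_dvd A d n : (forall x, x \in A -> d %| x) -> gen A n -> d %| n.
Proof.
elim: A n => [|x A IH] n Hd.
- by move=> /gen_nil ->.
- move=> /gen_cons [c [m [Hm ->]]].
  apply: dvdn_add; first by apply: dvdn_mull; apply: Hd; rewrite inE eqxx.
  by apply: IH => // y Hy; apply: Hd; rewrite inE Hy orbT.
Qed.

Lemma gen_scale A d n : (forall x, x \in A -> d %| x) ->
  gen [seq x %/ d | x <- A] n -> gen A (n * d).
Proof.
elim: A n => [|x A IH] n Hd /=.
- by move=> /gen_nil ->; apply: gen0.
- move=> /gen_cons [c [m [Hm ->]]].
  apply/gen_cons; exists c, (m * d); split.
  + by apply: IH => // y Hy; apply: Hd; rewrite inE Hy orbT.
  + by rewrite mulnDl -mulnA divnK // Hd // inE eqxx.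
Qed.

Lemma gen_dec A n : gen A n -> 0 < n -> exists2 x, x \in A & x <= n /\ gen A (n - x).
Proof.
elim: A n => [|x A IH] n.
- by move=> /gen_nil ->.
- move=> /gen_cons [c [m [Hm ->]]] Hn.
  case: c Hn => [|c] Hn.
  + have Hm0 : 0 < m by rewrite mul0n in Hn.
    have [y Hy [Hyn Hg]] := IH m Hm Hm0.
    exists y; first by rewrite inE Hy orbT.
    split; first by lia.
    by apply/gen_cons; exists 0, (m - y); split=> //; lia.
  + exists x; first by rewrite inE eqxx.
    split; first by lia.
    by apply/gen_cons; exists c, m; split=> //; rewrite mulSn; lia.
Qed.

Lemma gen_ng A n L : gen A n -> 0 < n -> n \notin A -> (forall x, x \in A -> L <= x) ->
  2 * L <= n.
Proof.
move=> Hg Hn HnA HL.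
have [x Hx [Hxn Hg']] := @gen_dec _ _ Hg Hn.
have Hpos : 0 < n - x.
  case: (ltnP 0 (n - x)) => // H.
  have : n = x by lia.
  by move=> E; rewrite E Hx in HnA.
have [y Hy [Hyn _]] := @gen_dec _ _ Hg' Hpos.
have := HL _ Hx; have := HL _ Hy; lia.
Qed.
Lemma gcds_cons x s : gcds (x :: s) = gcdn x (gcds s).
Proof. by rewrite /gcds big_cons. Qed.

Lemma gcds_rcons s x : gcds (rcons s x) = gcdn (gcds s) x.
Proof. by rewrite /gcds -cats1 big_cat /= big_seq1. Qed.

Lemma gcds_dvd s x : x \in s -> gcds s %| x.
Proof.
elim: s => [|y s IH] //; rewrite inE gcds_cons => /orP [/eqP ->|H].
- exact: dvdn_gcdl.
- exact: dvdn_trans (dvdn_gcdr _ _) (IH H).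
Qed.

Lemma dvdn_gcds s d : (forall x, x \in s -> d %| x) -> d %| gcds s.
Proof.
elim: s => [|y s IH] H; first by rewrite /gcds big_nil dvdn0.
rewrite gcds_cons dvdn_gcd H ?inE ?eqxx //=.
by apply: IH => x Hx; apply: H; rewrite inE Hx orbT.
Qed.

Lemma gcds_map s d : 0 < d -> (forall x, x \in s -> d %| x) ->
  gcds [seq x %/ d | x <- s] = gcds s %/ d.
Proof.
move=> Hd; elim: s => [|y s IH] H; first by rewrite /gcds big_nil div0n.
rewrite /= !gcds_cons IH; last by move=> x Hx; apply: H; rewrite inE Hx orbT.
have Hy : d %| y by apply: H; rewrite inE eqxx.
have Hs : d %| gcds s by apply: dvdn_gcds => x Hx; apply: H; rewrite inE Hx orbT.
apply/eqP; rewrite -(eqn_pmul2r Hd) muln_gcdl !divnK //.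
by rewrite dvdn_gcd Hy Hs.
Qed.

Lemma gcds_gt0 s x : x \in s -> 0 < x -> 0 < gcds s.
Proof.
move=> Hx Hp; have := gcds_dvd Hx.
by case: (gcds s) => //; rewrite dvd0n => /eqP H; rewrite H in Hp.
Qed.

Lemma dk_S r k : k < size r -> dk r k.+1 = gcdn (dk r k) (nth 0 r k).
Proof. by move=> Hk; rewrite /dk (take_nth 0 Hk) gcds_rcons. Qed.

Lemma gen_drop_at r k n : gen (take k r) n -> gen (drop_at k r) n.
Proof. by move=> H; rewrite /drop_at; apply: gen_cat_l. Qed.

Lemma mem_take_le (r : seq nat) k H x : k <= H -> x \in take k r -> x \in take H r.
Proof. by move=> Hk; rewrite -(take_takel r Hk) => /mem_take. Qed.

Lemma divn_div3 a b d : 0 < d -> d %| a -> d %| b -> (a %/ d) %/ (b %/ d) = a %/ b.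
Proof.
move=> Hd /dvdnP [a' ->] /dvdnP [b' ->]; rewrite !mulnK //.
by rewrite divnMr.
Qed.

Lemma free_gen h r : free_aux h r -> size r = h.+1 -> (forall x, x \in r -> 0 < x) ->
  forall k, 1 <= k <= h -> gen (take k r) (ek r k * nth 0 r k).
Proof.
elim: h r => [|h IH] r /= Hf Hs Hp k Hk; first by lia.
case: Hf => [[Hgl _] Hf].
set d := gcds (take h.+1 r) in Hgl Hf.
have Hd0 : 0 < d.
  apply: (@gcds_gt0 _ (nth 0 r 0)); last by apply: Hp; apply: mem_nth; rewrite Hs.
  rewrite -(nth_take 0 (n0 := h.+1)) //; apply: mem_nth; rewrite size_takel ?Hs; lia.
have HdA : forall x, x \in take h.+1 r -> d %| x by move=> x; apply: gcds_dvd.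
case: (ltnP k h.+1) => Hkh; last first.
  have -> : k = h.+1 by lia.
  rewrite /ek (dk_S (k := h.+1)) ?Hs // divn_mulAC ?dvdn_gcdl //.
pose s := [seq x %/ d | x <- take h.+1 r].
have Hss : size s = h.+1 by rewrite size_map size_take Hs ltnSn.
have Hps : forall x, x \in s -> 0 < x.
  move=> x /mapP [y Hy ->]; rewrite divn_gt0 //; apply: dvdn_leq; last exact: HdA.
  by apply: Hp; apply: mem_take Hy.
have := IH s Hf Hss Hps k; rewrite -/s => G.
have {G} G : gen (take k s) (ek s k * nth 0 s k) by apply: G; lia.
have Htk : take k s = [seq x %/ d | x <- take k r].
  by rewrite /s -map_take take_takel //; lia.
have Hdk : forall j, j <= h.+1 -> dk s j = dk r j %/ d.
  move=> j Hj; rewrite /dk /s -map_take take_takel // gcds_map //.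
  by move=> x Hx; apply: HdA; apply: mem_take_le Hx.
have Hdvd : forall j, j <= h.+1 -> d %| dk r j.
  move=> j Hj; apply: dvdn_gcds => x Hx; apply: HdA; apply: mem_take_le Hx.
  exact: Hj.
have Hek : ek s k = ek r k.
  rewrite /ek !Hdk ?divn_div3 //; try lia; apply: Hdvd; lia.
have Hnth : nth 0 s k = nth 0 r k %/ d.
  rewrite /s (nth_map 0); last by rewrite size_takel ?Hs; lia.
  by rewrite nth_take.
have Hdr : d %| nth 0 r k.
  apply: HdA; rewrite -(nth_take 0 (n0 := h.+1)) //; apply: mem_nth.
  by rewrite size_takel ?Hs; lia.
rewrite Htk Hek Hnth in G.
have := gen_scale (A := take k r) (d := d) _ G.
rewrite -mulnA divnK //; apply.
by move=> x Hx; apply: HdA; apply: mem_take_le Hx; lia.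
Qed.
Unset Implicit Arguments. Set Strict Implicit.

Theorem lemma3p3 (h : nat) (r : seq nat) (F : int) :
  (1 <= h)%N -> size r = h.+1 -> minimal_gens r -> free_arr r -> frobenius r F ->
  (* (1) *) coprime (dk r h) (nth 0 r h) /\
  (* (2) *) ((Posz (dk r h) %| (F + Posz (nth 0 r h))%R)%Z /\ ~~ (Posz (dk r h) %| F)%Z) /\
  (* (3) *) (forall k, (1 <= k <= h)%N ->
               gen (take k r) (ek r k * nth 0 r k) /\ (2 <= ek r k)%N) /\
  (* (4) *) ((forall k, (1 <= k <= h)%N -> (dk r k.+1 < dk r k)%N) /\ dk r h.+1 = 1%N) /\
  (* (5) *) ((dk r h)%:R <= (F + 1)%:~R / ((nth 0 r h)%:R - 1) + 1 :> rat)%R /\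
  (* (6) *) (2 ^ h <= (dk r h - 1) * (nth 0 r h - 1))%N.
Proof.
move=> Hh Hs [Hnum [Huniq Hmin]] Hfree [HFn HFz].
have Hp : forall x, x \in r -> 0 < x.
  move=> x Hx; rewrite lt0n; apply/negP => /eqP Hx0.
  apply: (Hmin (index x r)); first by rewrite index_mem.
  by rewrite nth_index // Hx0; apply: gen0.
have Hpi : forall i, i < size r -> 0 < nth 0 r i.
  by move=> i Hi; apply: Hp; apply: mem_nth.
have gcd1 : dk r h.+1 = 1.
  rewrite /dk -Hs take_size.
  case: Hnum => N HN.
  have HdA : forall x, x \in r -> gcds r %| x by move=> x; apply: gcds_dvd.
  have H1 := gen_dvd HdA (HN N (leqnn N)).
  have H2 := gen_dvd HdA (HN N.+1 (leqnSn N)).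
  by move: H2; rewrite -addn1 dvdn_addr // dvdn1 => /eqP.
have Hf : free_aux h r by move: Hfree; rewrite /free_arr Hs.
have Hfg := free_gen Hf Hs Hp.
have HdS : forall k, k <= h -> dk r k.+1 = gcdn (dk r k) (nth 0 r k).
  by move=> k Hk; apply: dk_S; rewrite Hs.
have Hdpos : forall k, 1 <= k <= h.+1 -> 0 < dk r k.
  case=> [|k] Hk //; rewrite HdS; last by lia.
  by rewrite gcdn_gt0 Hpi ?orbT // Hs; lia.
have HdD : forall k, k <= h -> dk r k.+1 %| dk r k.
  by move=> k Hk; rewrite HdS // dvdn_gcdl.
have Hek : forall k, 1 <= k <= h -> dk r k = ek r k * dk r k.+1.
  by move=> k Hk; rewrite /ek divnK // HdD //; lia.
have Hek2 : forall k, 1 <= k <= h -> 2 <= ek r k.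
  move=> k Hk; case: (ltnP 1 (ek r k)) => // Hle.
  have := Hek k Hk; have := Hdpos k ltac:(lia).
  case E : (ek r k) => [|[|e]] /=; try lia.
  move=> _ _; exfalso; apply: (Hmin k); first by rewrite Hs; lia.
  apply: gen_drop_at; have := Hfg k Hk; rewrite E mul1n; done.
have Hcop : coprime (dk r h) (nth 0 r h) by rewrite /coprime -HdS // gcd1.
have Hd2 : 2 <= dk r h by rewrite (Hek h) ?gcd1 ?muln1; [apply: Hek2|]; lia.
have Hr : r = take h r ++ [:: nth 0 r h].
  by rewrite cats1 -take_nth ?Hs // -Hs take_size.
have Hsplit : forall n, gen r n <-> exists m c, gen (take h r) m /\ n = m + c * nth 0 r h.
  move=> n; rewrite {1}Hr gen_cat; split.
  - case=> m [m' [Hm [/gen_cons [c [k [/gen_nil -> Hm']]] ->]]].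
    by exists m, c; split=> //; rewrite Hm' addn0.
  - case=> m [c [Hm ->]]; exists m, (c * nth 0 r h); split=> //; split=> //.
    by apply/gen_cons; exists c, 0; split; [apply/gen_nil|rewrite addn0].
have HdG : forall m, gen (take h r) m -> dk r h %| m.
  by move=> m; apply: gen_dvd => x; apply: gcds_dvd.
have Hmemd : forall i j, i < size r -> j < i -> nth 0 r i \in drop_at j r.
  move=> i j Hi Hj; rewrite /drop_at mem_cat; apply/orP; right.
  have -> : nth 0 r i = nth 0 (drop j.+1 r) (i - j.+1) by rewrite nth_drop; congr nth; lia.
  by apply: mem_nth; rewrite size_drop Hs; move: Hi; rewrite Hs; lia.
have HC : forall i, 1 <= i <= h.+1 -> forall x, x \in take i r -> 2 ^ i.-1 * dk r i <= x.
  elim=> [|i IH] Hi x Hx; first by lia.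
  case: i IH Hi Hx => [|i] IH Hi Hx.
    rewrite expn0 mul1n; apply: dvdn_leq; last exact: gcds_dvd.
    by apply: Hp; apply: mem_take Hx.
  have Hi1 : i.+1 <= h by lia.
  have E := Hek i.+1 ltac:(lia).
  have E2 := Hek2 i.+1 ltac:(lia).
  have Hd' := Hdpos i.+2 ltac:(lia).
  move: Hx; rewrite (take_nth 0) ?Hs; last by lia.
  rewrite -cats1 mem_cat => /orP [Hx|]; rewrite /= expnS.
    have := IH ltac:(lia) x Hx; rewrite /= E; nia.
  rewrite inE => /eqP ->.
  have Hg := Hfg i.+1 ltac:(lia).
  have Hpos : 0 < ek r i.+1 * nth 0 r i.+1 by rewrite muln_gt0 Hpi ?Hs; lia.
  have Hnot : ek r i.+1 * nth 0 r i.+1 \notin take i.+1 r.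
    apply/negP => Hin.
    have Hj : index (ek r i.+1 * nth 0 r i.+1) r < i.+1 by rewrite -in_take_leq // Hs; lia.
    apply: (Hmin (index (ek r i.+1 * nth 0 r i.+1) r)); first by rewrite Hs; lia.
    rewrite nth_index; last exact: mem_take Hin.
    by apply: gen_mem; apply: Hmemd => //; rewrite Hs.
  have := gen_ng Hg Hpos Hnot (IH ltac:(lia)).
  rewrite /= E; nia.
have Ha : 2 ^ h <= nth 0 r h.
  have := HC h.+1 ltac:(lia) (nth 0 r h); rewrite gcd1 muln1 /=; apply.
  by rewrite (take_nth 0) ?Hs // mem_rcons inE eqxx.
have H2h : 2 <= 2 ^ h by rewrite -(subnKC Hh) add1n expnS; have := expn_gt0 2 (h - 1); lia.
set d := dk r h in Hcop Hd2 HdG H2h *.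
set a := nth 0 r h in Hcop Ha Hsplit HdG *.
have Hz : forall n, gen r n -> d * a = n + d + a -> False.
  move=> n /Hsplit [m [c [Hm ->]]] E.
  have Hdm := HdG m Hm.
  have : d %| m + (c.+1 * a + d).
    have -> : m + (c.+1 * a + d) = d * a by rewrite mulSn; lia.
    exact: dvdn_mulr.
  rewrite dvdn_addr // dvdn_addl // Gauss_dvdl // => /dvdn_leq Hle.
  have Hle' := Hle isT.
  have : d * a <= c.+1 * a by apply: leq_mul.
  lia.
have Hda : d + a <= d * a by nia.
have HzF : (Posz (d * a - d - a) <= F)%R.
  rewrite leNgt; apply/negP => Hlt.
  have [n [En Hn]] := HFz _ Hlt.
  by apply: (Hz n Hn); lia.
case: F HFn HFz HzF => [f|f] HFn HFz HzF; last by lia.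
have Hf2 : d * a <= f + d + a by lia.
have Hdiv : d %| f + a.
  have [n [En Hn]] := HFz (Posz f + Posz a)%R ltac:(lia).
  move: Hn => /Hsplit [m [c [Hm Enm]]].
  case: c Enm => [|c] Enm.
    have -> : f + a = m by lia.
    by apply: HdG.
  exfalso; apply: HFn; exists f; split=> //; apply/Hsplit; exists m, c; split=> //.
  rewrite mulSn in Enm; lia.
split; first done.
split.
  split; first by rewrite -PoszD /dvdz /=.
  apply/negP => Hdf.
  have Hdf' : d %| f by move: Hdf; rewrite /dvdz /=.
  move: Hdiv; rewrite dvdn_addr // => Hdva.
  have : d %| gcdn d a by rewrite dvdn_gcd dvdnn.
  by move: Hcop; rewrite /coprime => /eqP ->; rewrite dvdn1 => /eqP Hd1; lia.
split.
  by move=> k Hk; split; [apply: Hfg|apply: Hek2].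
split.
  split=> // k Hk; have := Hek k Hk; have := Hek2 k Hk; have := Hdpos k.+1 ltac:(lia); nia.
split; last first.
  have Hodd : d = 2 -> a != 2 ^ h.
    move=> Hd; move: Hcop; rewrite Hd coprime2n => Hodd; apply/eqP => Ea.
    by move: Hodd; rewrite Ea oddX /=; case: (h) Hh.
  case: (ltnP 2 d) => Hd3.
    have : 2 * (2 ^ h - 1) <= (d - 1) * (a - 1) by apply: leq_mul; lia.
    lia.
  have Hd : d = 2 by lia.
  have := Hodd Hd; rewrite Hd; move=> /eqP Hne; nia.
have Ha2 : 2 <= a by lia.
have Kr : ((d * a)%:R <= (f + d + a)%:R :> rat)%R by rewrite ler_nat; lia.
rewrite natrM !natrD in Kr.
have -> : ((Posz f + 1)%:~R = f%:R + 1 :> rat)%R by rewrite intrD.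
have Ha2r : (2%:R <= a%:R :> rat)%R by rewrite ler_nat.
have Hq : (0 < a%:R - 1 :> rat)%R by lra.
rewrite -lerBlDr ler_pdivlMr //.
nra.
Qed.
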